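(* Let $h\in\bar K[z]$ be nonzero and let $h=q^2+\rho$ be a part-square decomposition with $t_{q,\rho}<2v(2)$. Then: (a) the decomposition is good if and only if some (equivalently, any) normalized reduction of $\rho$ is not the square of a polynomial in $k[z]$; (b) if the decomposition $h=q^2+\rho$ is good and $h=\tilde q^2+\tilde\rho$ is another good part-square decomposition, then for any normalized reductions of $\rho$ and $\tilde\rho$, the sets of odd degrees of monomials appearing in them coincide, and their derivatives are equal up to a nonzero scalar in $k$.
   Context: $K$ is a field of characteristic $0$, complete with respect to a discrete valuation $v$ (values in $\mathbb{Q}\cup\{+\infty\}$), with algebraically closed residue field $k$ of characteristic $2$; $v$ extends to a fixed algebraic closure $\bar K$. For nonzero $h(z)=\sum_i H_iz^i\in\bar K[z]$, $v(h)=\min_i v(H_i)$ (Gauss valuation). A normalized reduction of a nonzero $h$ is the image in $k[z]$ of $\gamma^{-1}h$ for some $\gamma\in\bar K^\times$ with $v(\gamma)=v(h)$ (unique up to a nonzero scalar). A part-square decomposition of $h$ is an expression $h=q^2+\rho$ with $q,\rho\in\bar K[z]$ and $\deg q\le\lceil\deg(h)/2\rceil$; set $t_{q,\rho}=v(\rho)-v(h)$. The decomposition is good if either $t_{q,\rho}\ge 2v(2)$, or $t_{q,\rho}<2v(2)$ and there is no part-square decomposition $h=\tilde q^2+\tilde\rho$ with $t_{\tilde q,\tilde\rho}>t_{q,\rho}$. *)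

(* Defs.v *)
From HB Require Import structures.
From mathcomp Require Import all_boot all_order all_algebra.
From mathcomp Require Import constructive_ereal.
Set Implicit Arguments. Unset Strict Implicit. Unset Printing Implicit Defensive.
Import Order.TTheory GRing.Theory Num.Theory.
Local Open Scope ring_scope.
Local Open Scope ereal_scope.

(* L plays the role of \bar K (an algebraically closed field),
   K : {pred L} is the subfield K, v : L -> \bar rat the valuation
   (v x = +oo iff x = 0), k the residue field and red : L -> k the residue map
   (meaningful on the valuation ring {x | v x >= 0}). *)

Definition is_valuation (L : fieldType) (v : L -> \bar rat) : Prop :=
  [/\ forall x, v x = +oo <-> x = 0%R,
      forall x, v x != -oo,
      forall x y, v (x * y)%R = v x + v y &
      forall x y, Order.min (v x) (v y) <= v (x + y)%R].

Definition is_subfield (L : fieldType) (K : {pred L}) : Prop :=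
  [/\ 0%R \in K, 1%R \in K,
      forall x y, x \in K -> y \in K -> (x - y)%R \in K,
      forall x y, x \in K -> y \in K -> (x * y)%R \in K &
      forall x, x \in K -> x^-1%R \in K].

Definition discrete_on (L : fieldType) (K : {pred L}) (v : L -> \bar rat) : Prop :=
  exists2 d : rat, (0 < d)%R &
    forall x, x \in K -> x != 0%R -> exists z : int, v x = (d * z%:~R)%:E.

Definition complete_on (L : fieldType) (K : {pred L}) (v : L -> \bar rat) : Prop :=
  forall x : nat -> L, (forall n, x n \in K) ->
    (forall M : rat, exists N : nat, forall m n, (N <= m)%N -> (N <= n)%N ->
        M%:E <= v (x m - x n)%R) ->
    exists2 l, l \in K &
      forall M : rat, exists N : nat, forall n, (N <= n)%N -> M%:E <= v (x n - l)%R.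

Definition algebraic_over (L : fieldType) (K : {pred L}) : Prop :=
  forall x : L, exists2 p : {poly L}, (p != 0%R) && (p \is a polyOver K) & root p x.

(* red is the residue map of the valuation ring of v onto k; the residue
   field of K (image of K's valuation ring) is already all of k *)
Definition residue_map (L k : fieldType) (K : {pred L}) (v : L -> \bar rat)
    (red : L -> k) : Prop :=
  [/\ forall x y, 0 <= v x -> 0 <= v y -> red (x + y)%R = (red x + red y)%R,
      forall x y, 0 <= v x -> 0 <= v y -> red (x * y)%R = (red x * red y)%R,
      red 1%R = 1%R,
      forall x, 0 <= v x -> (red x = 0%R <-> 0 < v x) &
      (forall c : k, exists2 x, x \in K & (0 <= v x) /\ red x = c)].

Definition setting (L k : closedFieldType) (K : {pred L}) (v : L -> \bar rat)
    (red : L -> k) : Prop :=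
  [/\ [pchar L] =i pred0,
      2%N \in [pchar k],
      is_subfield K /\ is_valuation v,
      [/\ discrete_on K v, complete_on K v & algebraic_over K] &
      residue_map K v red].

Definition vpoly (L : fieldType) (v : L -> \bar rat) (h : {poly L}) : \bar rat :=
  \big[Order.min/+oo]_(i < size h) v h`_i.

Definition norm_red (L k : fieldType) (v : L -> \bar rat) (red : L -> k)
    (h : {poly L}) (hbar : {poly k}) : Prop :=
  exists2 g : L, g != 0%R & v g = vpoly v h /\ hbar = map_poly red (g^-1 *: h).

(* h = q^2 + rho is a part-square decomposition: deg q <= ceil(deg h / 2)
   (with deg 0 = -oo, so q = 0 is allowed) *)
Definition part_square (L : fieldType) (h q rho : {poly L}) : Prop :=
  h = (q ^+ 2 + rho)%R /\ (size q <= (uphalf (size h).-1).+1)%N.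

Definition tqr (L : fieldType) (v : L -> \bar rat) (h rho : {poly L}) : \bar rat :=
  vpoly v rho - vpoly v h.

Definition good_decomp (L : fieldType) (v : L -> \bar rat) (h q rho : {poly L}) : Prop :=
  part_square h q rho /\
  ((v 2%R *+ 2 <= tqr v h rho) \/
   (tqr v h rho < v 2%R *+ 2 /\
    ~ exists q' rho', part_square h q' rho' /\ tqr v h rho < tqr v h rho')).

Definition is_square_poly (k : fieldType) (p : {poly k}) : Prop :=
  exists g : {poly k}, p = (g ^+ 2)%R.

(* Main.v *)
Require Import Defs.
From HB Require Import structures.
From mathcomp Require Import all_boot all_order all_algebra.
From mathcomp Require Import constructive_ereal.
From mathcomp Require Import ring lra zify.
Set Implicit Arguments. Unset Strict Implicit. Unset Printing Implicit Defensive.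
Import Order.TTheory GRing.Theory Num.Theory.
Local Open Scope ring_scope.
Local Open Scope ereal_scope.

Lemma sqrt_closed (F : closedFieldType) (a : F) : exists x : F, (x ^+ 2 = a)%R.
Proof.
have [x Hx] := @solve_monicpoly F 2%N (fun i => if i == 0%N then a else 0%R) isT.
exists x; rewrite Hx !big_ord_recr big_ord0 /=.
by rewrite add0r mul0r addr0 expr0 mulr1.
Qed.

Section Char2.
Variables (k : fieldType) (H2 : (2 \in [pchar k])%N).
Local Open Scope ring_scope.
Lemma two0 : (2%:R : k) = 0. Proof. exact: pcharf0. Qed.
Lemma natr_odd n : (n%:R : k) = (odd n)%:R.
Proof. by rewrite -(GRing.natr_mod_pchar H2) modn2. Qed.
Lemma sq_deriv (f : {poly k}) : (f ^+ 2)^`() = 0.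
Proof.
by rewrite expr2 derivM mulrC -mulr2n -scaler_nat two0 scale0r.
Qed.
Lemma sq_odd (f : {poly k}) i : odd i -> (f ^+ 2)`_i = 0.
Proof.
move=> hi; have i0 : (0 < i)%N by case: i hi.
have := coef_deriv (f ^+ 2) i.-1; rewrite sq_deriv coef0 prednK //.
by rewrite -mulr_natr natr_odd hi mulr1 => <-.
Qed.
End Char2.

Lemma arith (n sq sb sR sq2 sq' sS m : nat) : (0 < n)%N -> (sq <= m.+1)%N ->
  ((sb.-1 * 2).+1 <= sR)%N -> (sR <= maxn n sq2)%N -> (sq2 <= (sq.-1 * 2).+1)%N ->
  (m.*2 <= n <= m.*2.+1)%N -> (sq' <= maxn sq sS)%N -> (sS <= sb)%N -> (sq' <= m.+1)%N.
Proof. move=> *; lia. Qed.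

Section Val.
Variables (L k : closedFieldType) (K : {pred L}) (v : L -> \bar rat) (red : L -> k).
Hypotheses (Hv : is_valuation v) (Hred : residue_map K v red).

Lemma v0 : v 0%R = +oo. Proof. by case: Hv => H _ _ _; apply/H. Qed.
Lemma vfin x : x != 0%R -> exists a : rat, v x = a%:E.
Proof.
case: Hv => H Hn _ _ Hx; case E: (v x) => [a| |]; first by exists a.
- by move/H: E => /eqP; rewrite (negbTE Hx).
- by move: (Hn x); rewrite E.
Qed.
Lemma vM x y : v (x * y)%R = v x + v y. Proof. by case: Hv => _ _ H _; apply: H. Qed.
Lemma vD x y : Order.min (v x) (v y) <= v (x + y)%R. Proof. by case: Hv => _ _ _ H; apply: H. Qed.
Lemma v1 : v 1%R = 0.
Proof.
have [a Ha] := vfin (oner_neq0 L).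
have := vM 1 1; rewrite mulr1 Ha -EFinD => -[] ; move=> h.
by congr (_%:E); lra.
Qed.
Lemma vNone : v (-1)%R = 0.
Proof.
have [a Ha] : exists a : rat, v (-1)%R = a%:E by apply: vfin; rewrite oppr_eq0 oner_neq0.
have := vM (-1) (-1); rewrite mulrNN mulr1 v1 Ha -EFinD => -[] h.
by congr (_%:E); lra.
Qed.
Lemma vN x : v (- x)%R = v x.
Proof. by rewrite -mulN1r vM vNone add0e. Qed.
Lemma vB x y : Order.min (v x) (v y) <= v (x - y)%R.
Proof. by rewrite -(vN y) vD. Qed.
Lemma vV x : x != 0%R -> v x^-1 = - v x.
Proof.
move=> Hx; have [a Ha] := vfin Hx.
have [b Hb] : exists b : rat, v x^-1 = b%:E by apply: vfin; rewrite invr_eq0.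
have := vM x x^-1; rewrite mulfV // v1 Ha Hb -EFinD => -[] h.
by rewrite -EFinN; congr (_%:E); lra.
Qed.

Lemma red0 : red 0%R = 0%R.
Proof. case: Hred => _ _ _ H _; apply/H; rewrite v0 //. Qed.
Lemma redD x y : 0 <= v x -> 0 <= v y -> red (x + y)%R = (red x + red y)%R.
Proof. by case: Hred => H _ *; apply: H. Qed.
Lemma redM x y : 0 <= v x -> 0 <= v y -> red (x * y)%R = (red x * red y)%R.
Proof. by case: Hred => _ H _ *; apply: H. Qed.
Lemma red1 : red 1%R = 1%R. Proof. by case: Hred => _ _ H. Qed.
Lemma red_eq0 x : 0 <= v x -> (red x = 0%R <-> 0 < v x).
Proof. by case: Hred => _ _ _ H _; apply: H. Qed.
Lemma vD0 x y : 0 <= v x -> 0 <= v y -> 0 <= v (x + y)%R.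
Proof. move=> hx hy; apply: le_trans (vD x y); by rewrite le_min hx hy. Qed.
Lemma vD0' x y : 0 < v x -> 0 < v y -> 0 < v (x + y)%R.
Proof. move=> hx hy; apply: lt_le_trans (vD x y); by rewrite lt_min hx hy. Qed.
Lemma vB0 x y : 0 <= v x -> 0 <= v y -> 0 <= v (x - y)%R.
Proof. by move=> hx hy; apply: vD0 => //; rewrite vN. Qed.
Lemma vM0 x y : 0 <= v x -> 0 <= v y -> 0 <= v (x * y)%R.
Proof. by move=> hx hy; rewrite vM adde_ge0. Qed.
Lemma gt0_ge0_add (x y : \bar rat) : 0 < x -> 0 <= y -> 0 < x + y.
Proof.
case: x => [a| |]; case: y => [b| |] //=.
rewrite !lte_fin !lee_fin => ha hb; lra.
Qed.
Lemma vM0' x y : 0 < v x -> 0 <= v y -> 0 < v (x * y)%R.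
Proof. by move=> hx hy; rewrite vM gt0_ge0_add. Qed.
Lemma vM0'' x y : 0 <= v x -> 0 < v y -> 0 < v (x * y)%R.
Proof. by move=> hx hy; rewrite mulrC vM0'. Qed.
Lemma redN x : 0 <= v x -> red (- x)%R = (- red x)%R.
Proof.
move=> hx; have hn : 0 <= v (-x)%R by rewrite vN.
apply/eqP; rewrite -subr_eq0 opprK addrC -redD // subrr red0 //.
Qed.
Lemma redB x y : 0 <= v x -> 0 <= v y -> red (x - y)%R = (red x - red y)%R.
Proof. by move=> hx hy; rewrite redD ?vN // redN. Qed.

Lemma v_sum0 (I : Type) (r : seq I) (P : pred I) (F : I -> L) :
  (forall i, P i -> 0 <= v (F i)) -> 0 <= v (\sum_(i <- r | P i) F i)%R.
Proof. move=> H; apply: (big_ind (fun x => 0 <= v x)) => //; [by rewrite v0 | exact: vD0]. Qed.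
Lemma v_sum0' (I : Type) (r : seq I) (P : pred I) (F : I -> L) :
  (forall i, P i -> 0 < v (F i)) -> 0 < v (\sum_(i <- r | P i) F i)%R.
Proof. move=> H; apply: (big_ind (fun x => 0 < v x)) => //; [by rewrite v0 | exact: vD0']. Qed.
Lemma red_sum (I : Type) (r : seq I) (P : pred I) (F : I -> L) :
  (forall i, P i -> 0 <= v (F i)) -> red (\sum_(i <- r | P i) F i)%R = (\sum_(i <- r | P i) red (F i))%R.
Proof.
move=> H.
have := (big_ind2 (fun x y => 0 <= v x /\ red x = y) (id1 := 0%R) (op1 := +%R) (id2 := 0%R) (op2 := +%R)).
move=> /(_ _ _ _ r P F (fun i => red (F i))) [] //.
- by rewrite v0 red0.
- by move=> x1 x2 y1 y2 [h1 <-] [h2 <-]; split; [exact: vD0 | exact: redD].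
- by move=> i Pi; split => //; apply: H.
Qed.

Implicit Types p q : {poly L}.
Definition OP (p : {poly L}) := forall i, 0 <= v p`_i.
Definition MP (p : {poly L}) := forall i, 0 < v p`_i.
Definition rd (p : {poly L}) : {poly k} := map_poly red p.
Lemma rdE p i : (rd p)`_i = red p`_i.
Proof. by rewrite coef_map_id0 // red0. Qed.
Lemma MP_OP p : MP p -> OP p. Proof. by move=> H i; apply: ltW. Qed.
Lemma OPD p q : OP p -> OP q -> OP (p + q)%R. Proof. by move=> hp hq i; rewrite coefD vD0. Qed.
Lemma OPN p : OP p -> OP (- p)%R. Proof. by move=> hp i; rewrite coefN vN. Qed.
Lemma OPB p q : OP p -> OP q -> OP (p - q)%R. Proof. by move=> hp hq; apply: OPD => //; apply: OPN. Qed.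
Lemma MPD p q : MP p -> MP q -> MP (p + q)%R. Proof. by move=> hp hq i; rewrite coefD vD0'. Qed.
Lemma MPN p : MP p -> MP (- p)%R. Proof. by move=> hp i; rewrite coefN vN. Qed.
Lemma MPB p q : MP p -> MP q -> MP (p - q)%R. Proof. by move=> hp hq; apply: MPD => //; apply: MPN. Qed.
Lemma OPM p q : OP p -> OP q -> OP (p * q)%R.
Proof. by move=> hp hq i; rewrite coefM; apply: v_sum0 => j _; apply: vM0. Qed.
Lemma MPMl p q : MP p -> OP q -> MP (p * q)%R.
Proof. by move=> hp hq i; rewrite coefM; apply: v_sum0' => j _; apply: vM0'. Qed.
Lemma OPZ c p : 0 <= v c -> OP p -> OP (c *: p).
Proof. by move=> hc hp i; rewrite coefZ vM0. Qed.
Lemma rdD p q : OP p -> OP q -> (rd (p + q) = rd p + rd q)%R.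
Proof. by move=> hp hq; apply/polyP => i; rewrite coefD !rdE coefD redD. Qed.
Lemma rdN p : OP p -> (rd (- p) = - rd p)%R.
Proof. by move=> hp; apply/polyP => i; rewrite coefN !rdE coefN redN. Qed.
Lemma rdB p q : OP p -> OP q -> (rd (p - q) = rd p - rd q)%R.
Proof. by move=> hp hq; rewrite rdD ?rdN //; apply: OPN. Qed.
Lemma rdM p q : OP p -> OP q -> (rd (p * q) = rd p * rd q)%R.
Proof.
move=> hp hq; apply/polyP => i; rewrite coefM rdE coefM red_sum.
  by apply: eq_bigr => j _; rewrite redM // !rdE.
by move=> j _; apply: vM0.
Qed.
Lemma rdZ c p : 0 <= v c -> OP p -> (rd (c *: p) = red c *: rd p)%R.
Proof. by move=> hc hp; apply/polyP => i; rewrite coefZ !rdE coefZ redM. Qed.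
Lemma rd_eq0 p : OP p -> (rd p = 0%R <-> MP p).
Proof.
move=> hp; split.
  by move=> H i; apply/red_eq0 => //; rewrite -rdE H coef0.
by move=> H; apply/polyP => i; rewrite rdE coef0; apply/red_eq0.
Qed.

Lemma vpoly_le p i : vpoly v p <= v p`_i.
Proof.
case: (ltnP i (size p)) => hi.
  by rewrite /vpoly (bigmin_le _ (Ordinal hi) (fun j : 'I_(size p) => v p`_j)).
by rewrite nth_default // v0 leey.
Qed.
Lemma vpoly_ge p a : (forall i, a <= v p`_i) -> a <= vpoly v p.
Proof.
move=> H; rewrite /vpoly; apply: le_bigmin => //; exact: leey.
Qed.
Lemma vpoly_attain p : p != 0%R -> exists2 j, p`_j != 0%R & vpoly v p = v p`_j.
Proof.
move=> hp; have hs : (0 < size p)%N by rewrite size_poly_gt0.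
have hs' : ((size p).-1 < size p)%N by rewrite prednK.
have [i0 _ Hi0] := @eq_bigmin _ _ _ +oo (Ordinal hs') predT (fun j : 'I_(size p) => v p`_j) isT (fun _ _ => leey _).
exists i0; last by [].
apply/negP => /eqP h0.
have := vpoly_le p (size p).-1.
rewrite /vpoly Hi0 h0 v0 -lead_coefE.
have hl : lead_coef p != 0%R by rewrite lead_coef_eq0.
have [a ->] := vfin hl.
by rewrite leye_eq.
Qed.
Lemma NL p : p != 0%R ->
  exists2 d, d != 0%R & (forall i, v d <= v p`_i) /\ exists j, p`_j = d.
Proof.
move=> hp; have [j hj Hj] := vpoly_attain hp.
exists p`_j => //; split; last by exists j.
by move=> i; rewrite -Hj vpoly_le.
Qed.
Lemma vpoly_fin p : p != 0%R -> exists a : rat, vpoly v p = a%:E.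
Proof. by move=> hp; have [j hj ->] := vpoly_attain hp; apply: vfin. Qed.

Lemma ltE (a b : rat) (y : \bar rat) : (b%:E < a%:E + y) = ((b - a)%:E < y).
Proof. case: y => [c| |] //=; rewrite ?ltry // !lte_fin; apply/idP/idP => ?; lra. Qed.
Lemma leE (a b : rat) (y : \bar rat) : (b%:E <= a%:E + y) = ((b - a)%:E <= y).
Proof. case: y => [c| |] //=; rewrite ?leey // !lee_fin; apply/idP/idP => ?; lra. Qed.
Lemma lt0E (a : rat) (y : \bar rat) : (0 < a%:E + y) = ((- a)%:E < y).
Proof. case: y => [c| |] //=; rewrite ?ltry // !lte_fin; apply/idP/idP => ?; lra. Qed.
Lemma le0E (a : rat) (y : \bar rat) : (0 <= a%:E + y) = ((- a)%:E <= y).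
Proof. case: y => [c| |] //=; rewrite ?leey // !lee_fin; apply/idP/idP => ?; lra. Qed.
Lemma vVM x y (a : rat) : v x = a%:E -> x != 0%R -> v (x^-1 * y)%R = (- a)%:E + v y.
Proof. by move=> ha hx; rewrite vM vV // ha. Qed.
Lemma vVVM x y (a : rat) : v x = a%:E -> x != 0%R -> v (x^-1 * x^-1 * y)%R = (- a - a)%:E + v y.
Proof. by move=> ha hx; rewrite !vM vV // ha EFinB. Qed.

Lemma normP p d j : d != 0%R -> (forall i, v d <= v p`_i) -> p`_j = d ->
  OP (d^-1%:P * p)%R /\ rd (d^-1%:P * p)%R != 0%R.
Proof.
move=> hd hmin hj; have [a ha] := vfin hd; split.
  by move=> i; rewrite coefCM (vVM _ ha hd) le0E opprK -ha hmin.
apply/eqP => H; have := congr1 (fun P : {poly k} => P`_j) H.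
rewrite /= rdE coefCM hj mulVf // red1 coef0; exact/eqP/oner_neq0.
Qed.

Lemma LQ (e : rat) Q R D : v 2%:R = e%:E -> (0 < e)%R -> D = (Q ^+ 2 + R)%R -> OP R ->
  (forall i, (-(e * 2))%:E < v D`_i) -> MP (2%:R%:P * Q)%R.
Proof.
move=> he e0 hD hR hDi.
have [->|hQ] := eqVneq Q 0%R; first by move=> i; rewrite mulr0 coef0 v0.
have [d hd [hmin [j hj]]] := NL hQ; have [a ha] := vfin hd.
have key : forall i, (- e)%:E < v Q`_i.
  case: (ltP (- e)%R a) => hae.
    by move=> i; apply: lt_le_trans (hmin i); rewrite ha lte_fin.
  exfalso; have [hO hnz] := normP hd hmin hj.
  set Q1 := (d^-1%:P * Q)%R.
  have E : (Q1 ^+ 2 = (d^-1 * d^-1)%:P * D - (d^-1 * d^-1)%:P * R)%R.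
    by rewrite /Q1 hD polyCM; ring.
  have hM : MP (Q1 ^+ 2)%R.
    rewrite E; apply: MPB => i; rewrite coefCM (vVVM _ ha hd) lt0E.
      by apply: le_lt_trans (hDi i); rewrite lee_fin; lra.
    by apply: lt_le_trans (hR i); rewrite lte_fin; lra.
  move/rd_eq0: hM; rewrite expr2 rdM // => /(_ (OPM hO hO)) /eqP.
  by move=> H; move: hnz; rewrite -/Q1 => hnz; have := mulf_neq0 hnz hnz; rewrite H.
by move=> i; rewrite /= coefCM vM he lt0E key.
Qed.


Lemma Ldiff Q2 R R' S : MP Q2 -> OP R -> OP R' -> R = (R' + S ^+ 2 + Q2 * S)%R ->
  OP S /\ rd R = (rd R' + rd S ^+ 2)%R.
Proof.
move=> hQ hR hR' hE.
have hS : OP S.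
  have [->|hS] := eqVneq S 0%R; first by move=> i; rewrite coef0 v0 leey.
  have [d hd [hmin [j hj]]] := NL hS; have [a ha] := vfin hd.
  case: (leP 0%R a) => ha0.
    by move=> i; apply: le_trans (hmin i); rewrite ha lee_fin.
  exfalso; have [hO hnz] := normP hd hmin hj.
  set S1 := (d^-1%:P * S)%R.
  have E : (S1 ^+ 2 = (d^-1 * d^-1)%:P * (R - R') - (d^-1%:P * Q2) * S1)%R.
    by rewrite /S1 hE polyCM; ring.
  have hM : MP (S1 ^+ 2)%R.
    rewrite E; apply: MPB.
      move=> i; rewrite /= coefCM (vVVM _ ha hd) lt0E.
      by apply: lt_le_trans (OPB hR hR' i); rewrite lte_fin; lra.
    apply: MPMl => // i; rewrite /= coefCM (vVM _ ha hd) lt0E.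
    by apply: le_lt_trans (hQ i); rewrite lee_fin; lra.
  move/rd_eq0: hM; rewrite expr2 rdM // => /(_ (OPM hO hO)) /eqP.
  by move=> H; move: hnz; rewrite -/S1 => hnz; have := mulf_neq0 hnz hnz; rewrite H.
split => //.
have hQS : OP (Q2 * S)%R by apply: OPM => //; apply: MP_OP.
have hSS : OP (S ^+ 2)%R by rewrite expr2; apply: OPM.
rewrite hE !rdD //; last by apply: OPD.
have -> : rd (Q2 * S)%R = 0%R by apply/rd_eq0 => //; apply: MPMl.
by rewrite addr0 expr2 rdM.
Qed.

Lemma lift_ex (c : k) : exists x : L, (0 <= v x) && (red x == c).
Proof. case: Hred => _ _ _ _ /(_ c) [x _ [h1 h2]]; exists x; by rewrite h1 h2 eqxx. Qed.
Definition lift (c : k) : L := xchoose (lift_ex c).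
Lemma liftP c : 0 <= v (lift c) /\ red (lift c) = c.
Proof. by have /andP[h1 /eqP h2] := xchooseP (lift_ex c). Qed.

Lemma lift_poly (sb : {poly k}) : exists S, [/\ OP S, rd S = sb & (size S <= size sb)%N].
Proof.
exists (\poly_(i < size sb) lift sb`_i)%R; split.
- move=> i; rewrite coef_poly; case: ifP => _; first by case: (liftP sb`_i).
  by rewrite v0 leey.
- apply/polyP => i; rewrite rdE coef_poly; case: ifP => hi; first by case: (liftP sb`_i).
  by rewrite red0 nth_default // leqNgt hi.
- exact: size_poly.
Qed.

Lemma vpoly0 : vpoly v 0%R = +oo.
Proof. by rewrite /vpoly size_poly0 big_ord0. Qed.

Section Norm.
Variables (g0 : L) (t0 : rat) (hg0 : g0 != 0%R) (vg0 : v g0 = t0%:E).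

Lemma S1 p : OP (g0^-1%:P * p)%R <-> t0%:E <= vpoly v p.
Proof.
split.
  move=> H; apply: vpoly_ge => i; have := H i.
  by rewrite /= coefCM (vVM _ vg0 hg0) le0E opprK.
move=> H i; rewrite /= coefCM (vVM _ vg0 hg0) le0E opprK.
exact: le_trans H (vpoly_le _ _).
Qed.
Lemma S2 p : MP (g0^-1%:P * p)%R <-> t0%:E < vpoly v p.
Proof.
split.
  move=> H; have [->|hp] := eqVneq p 0%R; first by rewrite vpoly0 ltry.
  have [j _ ->] := vpoly_attain hp; have := H j.
  by rewrite /= coefCM (vVM _ vg0 hg0) lt0E opprK.
move=> H i; rewrite /= coefCM (vVM _ vg0 hg0) lt0E opprK.
exact: lt_le_trans H (vpoly_le _ _).
Qed.
Lemma NR p g : g != 0%R -> v g = t0%:E -> OP (g0^-1%:P * p)%R ->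
  map_poly red (g^-1 *: p) = (red (g^-1 * g0) *: rd (g0^-1%:P * p))%R /\ red (g^-1 * g0)%R != 0%R.
Proof.
move=> hg vg hO.
have v0' : v (g^-1 * g0)%R = 0 by rewrite (vVM _ vg hg) vg0 -EFinD addNr.
split.
  rewrite -rdZ ?v0' // /rd; congr map_poly; by rewrite -!mul_polyC mulrA -polyCM mulfK.
apply/eqP => /red_eq0; rewrite v0' => /(_ (lexx _)); by rewrite ltxx.
Qed.
End Norm.

Lemma sq_scale (a : k) (P : {poly k}) : a != 0%R ->
  (is_square_poly (a *: P)%R <-> is_square_poly P).
Proof.
move=> ha; have [b hb] := sqrt_closed a.
have hb0 : b != 0%R by apply: contraNneq ha => hb0; rewrite -hb hb0 expr0n.
split => -[f hf].
  exists (b^-1 *: f)%R; apply: (scalerI ha); rewrite hf -hb exprZn.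
  by rewrite scalerA -exprMn mulfV // expr1n scale1r.
by exists (b *: f)%R; rewrite hf exprZn hb.
Qed.

Lemma core (H0 : [pchar L] =i pred0) (H2 : (2 \in [pchar k])%N)
    (h q rho : {poly L}) (hnz : h != 0%R)
    (Hdec : part_square h q rho) (Ht : tqr v h rho < v 2%R *+ 2) :
  ((good_decomp v h q rho <->
      exists2 r : {poly k}, norm_red v red rho r & ~ is_square_poly r) /\
   (good_decomp v h q rho <->
      forall r : {poly k}, norm_red v red rho r -> ~ is_square_poly r)) /\
  (good_decomp v h q rho ->
   forall q' rho' : {poly L}, good_decomp v h q' rho' ->
   forall (r r' : {poly k}), norm_red v red rho r -> norm_red v red rho' r' ->
     (forall i : nat, odd i -> (r`_i == 0%R) = (r'`_i == 0%R)) /\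
     exists2 c : k, c != 0%R & r^`() = c *: r'^`()).
Proof.
have h20 : (2%:R : L) != 0%R by have := H0 2%N; rewrite !inE /= => /negbT.
have [e he] := vfin h20.
have e0 : (0 < e)%R.
  have hv2 : 0 <= v (2%:R : L) by rewrite mulr2n vD0 // v1.
  have : red (2%:R : L) = 0%R by rewrite mulr2n redD ?v1 // red1 -mulr2n two0.
  by move/(red_eq0 hv2); rewrite he lte_fin.
have [h0 vh] := vpoly_fin hnz.
have tqrlt : forall a b, tqr v h a < tqr v h b <-> vpoly v a < vpoly v b.
  by move=> a b; rewrite /tqr vh -EFinN lteD2rE.
have hrho : rho != 0%R.
  apply/eqP => hr; move: Ht; rewrite /tqr hr vpoly0 vh he -EFin_natmul /=.
  by rewrite ltNge leey.
have [j hj vrho] := vpoly_attain hrho.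
have [t0 vt0] := vfin hj.
set g0 := rho`_j in hj vrho vt0.
have Ht' : (t0 - h0 < e + e)%R.
  by move: Ht; rewrite /tqr vrho vt0 vh he -EFin_natmul -EFinB lte_fin mulr2n.
have [c hc] := sqrt_closed g0.
have hc0 : c != 0%R by apply: contraNneq hj => hc0; rewrite -hc hc0 expr0n.
have hgc : (g0^-1 = c^-1 * c^-1)%R by rewrite -invfM -expr2 hc.
case: (Hdec) => hh hsz.
have er : (rho = h - q ^+ 2)%R by rewrite hh addrC addKr.
have hmin : forall i, v g0 <= v rho`_i by move=> i; rewrite -vrho vpoly_le.
have [OR rdR0] := normP hj hmin (erefl _).
have hD : (g0^-1%:P * h = (c^-1%:P * q) ^+ 2 + g0^-1%:P * rho)%R.
  by rewrite hh hgc polyCM; ring.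
have hDi : forall i, (-(e*2))%:E < v (g0^-1%:P * h)%R`_i.
  move=> i; rewrite /= coefCM (vVM _ vt0 hj) ltE.
  apply: lt_le_trans (vpoly_le h i); rewrite vh lte_fin; lra.
have MQ := LQ he e0 hD OR hDi.
rewrite polyC_natr in MQ.
set R := (g0^-1%:P * rho)%R in OR rdR0 hD MQ *.
set Q := (c^-1%:P * q)%R in hD MQ *.
have better_of_sq : is_square_poly (rd R) ->
    exists q' rho', part_square h q' rho' /\ tqr v h rho < tqr v h rho'.
  case=> sb hsb; have [S [OS rdS sS]] := lift_poly sb.
  exists (q + c%:P * S)%R, (h - (q + c%:P * S) ^+ 2)%R; split.
    split; first by rewrite addrC subrK.
    have hsb0 : sb != 0%R.
      by apply: contraNneq rdR0 => hs0; rewrite hsb hs0 expr2 mul0r.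
    have s1 : ((size sb).-1 * 2).+1 = size (sb ^+ 2)%R.
      rewrite -(size_exp sb 2) prednK // size_poly_gt0; exact: expf_neq0.
    have s2 : (size (rd R) <= size R)%N.
      by apply/leq_sizeP => i hi; rewrite rdE nth_default // red0.
    have s3 : size R = size rho by rewrite /R size_Cmul // invr_eq0.
    have s4 : (size rho <= maxn (size h) (size (q ^+ 2)%R))%N.
      by rewrite er; apply: leq_trans (size_polyD _ _) _; rewrite size_polyN.
    have s5 := size_poly_exp_leq q 2.
    have s6 : (size (q + c%:P * S)%R <= maxn (size q) (size S))%N.
      by apply: leq_trans (size_polyD _ _) _; rewrite size_Cmul.
    have hn : (0 < size h)%N by rewrite size_poly_gt0.
    have hm : ((uphalf (size h).-1).*2 <= size h <= (uphalf (size h).-1).*2.+1)%N.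
      rewrite uphalfK; have := leq_b1 (odd (size h).-1).
      move: hn; case: (size h) => [//|n] _ _ /=; by case: (odd n); rewrite ?add1n ?add0n leqnn ?leqnSn ?ltnSn.
    have s7 : (((size sb).-1 * 2).+1 <= size rho)%N by rewrite s1 -hsb -s3.
    exact: (arith hn hsz s7 s4 s5 hm s6 sS).
  apply/tqrlt; rewrite vrho vt0; apply/(S2 hj vt0).
  have hcc : (c^-1%:P * c%:P = 1)%R by rewrite -polyCM mulVf.
  have E : (g0^-1%:P * (h - (q + c%:P * S) ^+ 2) = R - S ^+ 2 - (2%:R * Q) * S)%R.
    rewrite /R /Q hh hgc polyCM; apply/eqP; rewrite -subr_eq0; apply/eqP.
    transitivity ((c^-1%:P * c%:P - 1) * (- (2%:R * c^-1%:P * q * S) - S ^+ 2 * (c^-1%:P * c%:P + 1)))%R; first by ring.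
    by rewrite hcc subrr mul0r.
  rewrite E; apply: MPB; last by apply: MPMl.
  apply/rd_eq0; first by apply: OPB => //; rewrite expr2; apply: OPM.
  by rewrite rdB //; [rewrite expr2 rdM // -expr2 rdS hsb subrr | rewrite expr2; apply: OPM].
have nobetter : ~ is_square_poly (rd R) ->
    ~ exists q' rho', part_square h q' rho' /\ tqr v h rho < tqr v h rho'.
  move=> hns [q' [rho' [[hh' _] hlt]]].
  have MR' : MP (g0^-1%:P * rho')%R by apply/(S2 hj vt0); rewrite -vt0 -vrho; apply/tqrlt.
  have er' : (rho' = h - q' ^+ 2)%R by rewrite hh' addrC addKr.
  have E : R = (g0^-1%:P * rho' + (c^-1%:P * (q' - q)) ^+ 2 + (2%:R * Q) * (c^-1%:P * (q' - q)))%R.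
    by rewrite /R /Q er er' hgc polyCM; ring.
  have [_ hRR] := Ldiff MQ OR (MP_OP MR') E.
  apply: hns; exists (rd (c^-1%:P * (q' - q))%R).
  by rewrite hRR; move/(rd_eq0 (MP_OP MR')): MR' => ->; rewrite add0r.
have goodNS : good_decomp v h q rho <-> ~ is_square_poly (rd R).
  split.
    case=> _ [hle | [_ hnb]]; first by move: Ht; rewrite ltNge hle.
    by move=> hsq; apply: hnb; apply: better_of_sq.
  by move=> hns; split => //; right; split => //; apply: nobetter.
have normR : forall r, norm_red v red rho r -> exists2 a, a != 0%R & r = (a *: rd R)%R.
  move=> r [g hg [vg ->]]; rewrite vrho vt0 in vg.
  have [E ha] := NR hj vt0 hg vg OR; by exists (red (g^-1 * g0)%R).
have nr0 : norm_red v red rho (rd R).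
  by exists g0 => //; split; [rewrite vrho | rewrite /rd /R mul_polyC].
split.
  split; split.
  - by move=> hg; exists (rd R) => //; apply/goodNS.
  - case=> r hr hns; apply/goodNS => hs; apply: hns.
    by have [a ha ->] := normR r hr; apply/sq_scale.
  - move=> hg r hr; have [a ha ->] := normR r hr.
    by rewrite sq_scale //; apply/goodNS.
  - by move=> H; apply/goodNS; apply: H.
move=> hgood q' rho' hgood' r r' hr hr'.
have hnb := nobetter (goodNS.1 hgood).
case: hgood' => hps' hor.
have le1 : ~ (t0%:E < vpoly v rho').
  move=> H; apply: hnb; exists q', rho'; split => //; apply/tqrlt; by rewrite vrho vt0.
have le2 : ~ (vpoly v rho' < t0%:E).
  move=> H; case: hor => [hle | [_ hnb']].
    apply: le1; rewrite -vt0 -vrho; apply/tqrlt; exact: lt_le_trans Ht hle.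
  apply: hnb'; exists q, rho; split => //; apply/tqrlt; by rewrite vrho vt0.
have vr' : vpoly v rho' = t0%:E.
  apply/eqP; rewrite eq_le !leNgt; apply/andP; split; apply/negP => ?; [exact: le1 | exact: le2].
have OR' : OP (g0^-1%:P * rho')%R by apply/(S1 hj vt0); rewrite vr'.
case: hps' => hh' _.
have er' : (rho' = h - q' ^+ 2)%R by rewrite hh' addrC addKr.
have E : R = (g0^-1%:P * rho' + (c^-1%:P * (q' - q)) ^+ 2 + (2%:R * Q) * (c^-1%:P * (q' - q)))%R.
  by rewrite /R /Q er er' hgc polyCM; ring.
have [_ hRR] := Ldiff MQ OR OR' E.
have [a ha ->] := normR r hr.
case: hr' => g' hg' [vg' ->]; rewrite vr' in vg'.
have [E' hb] := NR hj vt0 hg' vg' OR'; rewrite E'.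
split.
  move=> i hi; rewrite !coefZ hRR coefD (sq_odd H2 _ hi) addr0.
  by rewrite !mulf_eq0 (negbTE ha) (negbTE hb).
exists (a / red (g'^-1 * g0))%R; first by rewrite mulf_neq0 // invr_eq0.
by rewrite !derivZ hRR derivD sq_deriv // addr0 scalerA mulfVK.
Qed.
End Val.



Unset Implicit Arguments.

Theorem proposition3p13 (L k : closedFieldType) (K : {pred L})
    (v : L -> \bar rat) (red : L -> k)
    (Hset : setting K v red)
    (h q rho : {poly L}) (hnz : h != 0%R)
    (Hdec : part_square h q rho) (Ht : tqr v h rho < v 2%R *+ 2) :
  ((good_decomp v h q rho <->
      exists2 r : {poly k}, norm_red v red rho r & ~ is_square_poly r) /\
   (good_decomp v h q rho <->
      forall r : {poly k}, norm_red v red rho r -> ~ is_square_poly r)) /\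
  (good_decomp v h q rho ->
   forall q' rho' : {poly L}, good_decomp v h q' rho' ->
   forall (r r' : {poly k}), norm_red v red rho r -> norm_red v red rho' r' ->
     (forall i : nat, odd i -> (r`_i == 0%R) = (r'`_i == 0%R)) /\
     exists2 c : k, c != 0%R & r^`() = c *: r'^`()).
Proof.
case: Hset => H0 H2 [_ Hv] _ Hred.
exact: (core Hv Hred H0 H2 hnz Hdec Ht).
Qed.
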